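(* For every two-player stage game $G$: if $G\in\mathcal{G}_{LS}^{p,p}$ then $G\in\mathcal{G}_{LS}^{m,p}$; that is, $\mathcal{G}_{LS}^{p,p}\subseteq\mathcal{G}_{LS}^{m,p}$.
   Context: A two-player stage game $G$ has finite nonempty action sets $A_1,A_2$ and payoffs $u_1,u_2:A_1\times A_2\to\mathbb{R}$, extended to mixed strategies by expectation. $G(T)$ is the $T$-round repetition with realized actions observed each round and payoffs the expected sum of stage payoffs; an SPE of $G(T)$ is a strategy profile whose continuation after every history of length $k<T$ is a Nash equilibrium of $G(T-k)$. Regimes: pure-pure ($p,p$): both players restricted to actions (in the stage game and in every round, including deviations); mixed-pure ($m,p$): player 1 may mix, player 2 uses only actions; mixed-mixed ($m,m$): both may mix. For regime $r$, $\mathrm{Nash}^r(G)$ is the set of stage-game profiles available in $r$ from which no player can profitably deviate unilaterally to a strategy available in $r$. Locally suboptimal behavior occurs in an SPE $\mu$ of $G(T)$ (regime $r$) if for some history $h$ of length $k<T$, $(\mu_1(h),\mu_2(h))\notin\mathrm{Nash}^r(G)$. $\mathcal{G}_{LS}^r$ is the set of stage games $G$ for which there exist $T\ge1$ and an SPE of $G(T)$ in regime $r$ in which locally suboptimal behavior occurs. *)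

(* Defs.v *)
From HB Require Import structures.
From mathcomp Require Import all_boot all_order all_algebra.
From mathcomp Require Import reals.
Set Implicit Arguments. Unset Strict Implicit. Unset Printing Implicit Defensive.
Import Order.TTheory GRing.Theory Num.Theory.
Local Open Scope ring_scope.

(* Regimes: pure-pure, mixed-pure (player 1 mixes), mixed-mixed. *)
Inductive regime := PP | MP | MM.

Definition mixes1 (r : regime) : bool := if r is PP then false else true.
Definition mixes2 (r : regime) : bool := if r is MM then true else false.

Section Games.
Variables (R : realType) (A1 A2 : finType).

Definition is_mixed (A : finType) (x : {ffun A -> R}) : Prop :=
  (forall a, 0 <= x a) /\ \sum_(a : A) x a = 1.

(* Point mass at a (pure action as a degenerate mixed strategy). *)
Definition pt (A : finType) (a : A) : {ffun A -> R} :=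
  [ffun b => if b == a then 1 else 0].

Definition is_pure (A : finType) (x : {ffun A -> R}) : Prop :=
  exists a : A, x = pt a.

Definition avail (b : bool) (A : finType) (x : {ffun A -> R}) : Prop :=
  if b then is_mixed x else is_pure x.

Definition avail1 (r : regime) := @avail (mixes1 r) A1.
Definition avail2 (r : regime) := @avail (mixes2 r) A2.

Definition eu (u : A1 -> A2 -> R) (x1 : {ffun A1 -> R}) (x2 : {ffun A2 -> R}) : R :=
  \sum_(a1 : A1) \sum_(a2 : A2) x1 a1 * x2 a2 * u a1 a2.

Definition stageNash (r : regime) (u1 u2 : A1 -> A2 -> R)
    (x1 : {ffun A1 -> R}) (x2 : {ffun A2 -> R}) : Prop :=
  [/\ avail1 r x1, avail2 r x2,
      (forall y1, avail1 r y1 -> eu u1 y1 x2 <= eu u1 x1 x2) &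
      (forall y2, avail2 r y2 -> eu u2 x1 y2 <= eu u2 x1 x2)].

(* Histories of realized action profiles, and (behavioral) strategies of the
   repeated game. *)
Definition hist := seq (A1 * A2).
Definition strat1 := hist -> {ffun A1 -> R}.
Definition strat2 := hist -> {ffun A2 -> R}.

Definition avail_strat1 (r : regime) (s : strat1) : Prop := forall h, avail1 r (s h).
Definition avail_strat2 (r : regime) (s : strat2) : Prop := forall h, avail2 r (s h).

Fixpoint rpay (u : A1 -> A2 -> R) (s1 : strat1) (s2 : strat2) (n : nat) (h : hist) : R :=
  match n with
  | 0 => 0
  | n'.+1 => \sum_(a1 : A1) \sum_(a2 : A2)
               s1 h a1 * s2 h a2 * (u a1 a2 + rpay u s1 s2 n' (rcons h (a1, a2)))
  end.

Definition gpay (u : A1 -> A2 -> R) (s1 : strat1) (s2 : strat2) (n : nat) : R :=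
  rpay u s1 s2 n [::].

Definition repNash (r : regime) (u1 u2 : A1 -> A2 -> R) (n : nat)
    (s1 : strat1) (s2 : strat2) : Prop :=
  (forall t1, avail_strat1 r t1 -> gpay u1 t1 s2 n <= gpay u1 s1 s2 n) /\
  (forall t2, avail_strat2 r t2 -> gpay u2 s1 t2 n <= gpay u2 s1 s2 n).

Definition cont1 (s : strat1) (h : hist) : strat1 := fun h' => s (h ++ h').
Definition cont2 (s : strat2) (h : hist) : strat2 := fun h' => s (h ++ h').

Definition SPE (r : regime) (u1 u2 : A1 -> A2 -> R) (T : nat)
    (s1 : strat1) (s2 : strat2) : Prop :=
  [/\ avail_strat1 r s1, avail_strat2 r s2 &
      forall h : hist, (size h < T)%N ->
        repNash r u1 u2 (T - size h) (cont1 s1 h) (cont2 s2 h)].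

Definition locally_subopt (r : regime) (u1 u2 : A1 -> A2 -> R) (T : nat)
    (s1 : strat1) (s2 : strat2) : Prop :=
  exists h : hist, (size h < T)%N /\ ~ stageNash r u1 u2 (s1 h) (s2 h).

Definition in_GLS (r : regime) (u1 u2 : A1 -> A2 -> R) : Prop :=
  exists T : nat, (1 <= T)%N /\
    exists (s1 : strat1) (s2 : strat2),
      SPE r u1 u2 T s1 s2 /\ locally_subopt r u1 u2 T s1 s2.

End Games.

(* Main.v *)
Require Import Defs.
From mathcomp Require Import all_boot all_order all_algebra.
From mathcomp Require Import reals.
From Stdlib Require Import ClassicalEpsilon.
Import Order.TTheory GRing.Theory Num.Theory.
Local Open Scope ring_scope.

Section Aux.
Variables (R : realType) (A1 A2 : finType).

Lemma rpay_ext (u : A1 -> A2 -> R) (s1 t1 : strat1 R A1 A2) (s2 : strat2 R A1 A2) n :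
  forall h, (forall h', (size h <= size h')%N -> s1 h' = t1 h') ->
  rpay u s1 s2 n h = rpay u t1 s2 n h.
Proof.
elim: n => [//|n IH] h H /=.
rewrite H //; apply: eq_bigr => a _; apply: eq_bigr => b _.
rewrite (IH (rcons h (a, b))) // => h' Hh'; apply: H.
by move: Hh'; rewrite size_rcons; apply: leq_trans.
Qed.

Lemma sum_pt (A : finType) (b : A) (F : A -> R) :
  \sum_a (pt R b a) * F a = F b.
Proof.
rewrite (bigD1 b) //= big1 ?addr0; first by rewrite ffunE eqxx mul1r.
by move=> a /negbTE Hab; rewrite ffunE Hab mul0r.
Qed.

Lemma pt_mixed (A : finType) (b : A) : is_mixed (pt R b).
Proof.
split; first by move=> a; rewrite ffunE; case: (a == b).
by rewrite -(sum_pt _ b (fun _ => 1)) ; apply: eq_bigr => a _; rewrite mulr1.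
Qed.

Lemma pure_best (a0 : A1) (u : A1 -> A2 -> R) (s2 : strat2 R A1 A2)
  (Hs2 : forall h, is_pure (s2 h)) n :
  forall h (t1 : strat1 R A1 A2), (forall h, is_mixed (t1 h)) ->
  exists t1' : strat1 R A1 A2, (forall h, is_pure (t1' h)) /\
    rpay u t1 s2 n h <= rpay u t1' s2 n h.
Proof.
elim: n => [|n IH] h t1 Ht1.
  by exists (fun _ => pt R a0); split => // ?; exists a0.
have [b Hb] := Hs2 h.
pose T a := proj1_sig (constructive_indefinite_description _
   (IH (rcons h (a, b)) t1 Ht1)).
have HT a : (forall h, is_pure (T a h)) /\
    rpay u t1 s2 n (rcons h (a, b)) <= rpay u (T a) s2 n (rcons h (a, b)).
  by rewrite /T; case: constructive_indefinite_description.
pose f a := u a b + rpay u (T a) s2 n (rcons h (a, b)).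
case: (@arg_maxP _ _ _ a0 xpredT f isT) => [as' _ Hmax].
pose t1' : strat1 R A1 A2 := fun h' => if h' == h then pt R as' else T as' h'.
exists t1'; split.
  by move=> h'; rewrite /t1'; case: (h' == h); [exists as' | exact: (HT as').1].
have E (t : strat1 R A1 A2) : rpay u t s2 n.+1 h =
    \sum_a1 t h a1 * (u a1 b + rpay u t s2 n (rcons h (a1, b))).
  rewrite /= Hb; apply: eq_bigr => a _.
  rewrite -(sum_pt _ b (fun a2 => t h a * (u a a2 + rpay u t s2 n (rcons h (a, a2))))).
  apply: eq_bigr => c _; by rewrite -mulrA mulrCA.
rewrite !E {1}/t1' eqxx sum_pt.
rewrite (rpay_ext _ _ (T as')); last first.
  move=> h' Hh'; rewrite /t1'; case: eqP => // Eh; move: Hh'.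
  by rewrite Eh size_rcons ltnn.
apply: (@le_trans _ _ (\sum_a1 t1 h a1 * f as')).
  apply: ler_sum => a _; apply: ler_wpM2l; first exact: (Ht1 h).1.
  apply: (le_trans _ (Hmax a isT)); rewrite /f lerD2l; exact: (HT a).2.
by rewrite -mulr_suml (Ht1 h).2 mul1r.
Qed.

End Aux.

Theorem mainTheorem8 (R : realType) (A1 A2 : finType) (a1 : A1) (a2 : A2)
    (u1 u2 : A1 -> A2 -> R) :
  in_GLS PP u1 u2 -> in_GLS MP u1 u2.
Proof.
move=> [T [HT [s1 [s2 [[Hs1 Hs2 Hn] [h [Hh Hns]]]]]]].
exists T; split => //; exists s1, s2; split.
  split => //.
  - by move=> h'; have [a ->] := Hs1 h'; exact: pt_mixed.
  - move=> h' Hh'; have [N1 N2] := Hn h' Hh'; split => // t1 Ht1.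
    have [t1' [Ht1' Hle]] := @pure_best R A1 A2 a1 u1 _ (fun h0 => Hs2 (h' ++ h0))
       (T - size h') [::] t1 Ht1.
    exact: (le_trans Hle (N1 t1' Ht1')).
exists h; split => //; move=> [M1 M2 M3 M4]; apply: Hns; split => //.
move=> y1 [a ->]; apply: M3; exact: (@pt_mixed R A1 a).
Qed.
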